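(* Assume values are i.i.d. with CDF $F$ on $[0,\bar v]$ and continuous density $f > 0$, and $2 \le k < n$. Let $z$ be the interim payment function of the efficient allocation rule, $\bar R = n\,\mathbb E[z(v)]$, $G(u) = \binom{n-1}{k-1}(1-F(u))^{k-2}F(u)^{n-k} f(u)$, $$ N(v) = \int_0^v \big[z'(u) - \bar R\, G(u)\big](1-F(u))\,du, \qquad D(v) = \binom{n-1}{k-1} F(v)^{n-k}(1-F(v))^k, $$ and $\psi(v) = N(v)/D(v)$ for $v \in (0,\bar v)$. Then $\lim_{v \downarrow 0}\psi(v) = 0$.
   Context: Setting: $n$ unit-demand bidders, $k$ identical items. The efficient allocation rule gives one item to each of the $k$ bidders with the highest values (ties broken by any fixed rule). Its interim allocation is $x(v) = \mathbb E[A_i(\bm v)\mid v_i = v]$ and interim payment $z(v) = v x(v) - \int_0^v x(u)\,du$. *)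

(* Defs.v *)
From Stdlib Require Export Reals Binomial.
From Coquelicot Require Export Coquelicot.
Open Scope R_scope.

(* Interim allocation of the efficient rule for a bidder with value v:
   probability that at most k-1 of the other n-1 i.i.d. bidders have a
   value exceeding v (ties have probability zero since F is continuous). *)
Definition interim_alloc (n k : nat) (F : R -> R) (v : R) : R :=
  sum_f_R0 (fun j => Binomial.C (n - 1) j * (1 - F v) ^ j * (F v) ^ (n - 1 - j)) (k - 1).

Definition interim_pay (n k : nat) (F : R -> R) (v : R) : R :=
  v * interim_alloc n k F v - RInt (fun u => interim_alloc n k F u) 0 v.

Definition exp_revenue (n k : nat) (F f : R -> R) (vbar : R) : R :=
  INR n * RInt (fun v => interim_pay n k F v * f v) 0 vbar.

Definition Gfun (n k : nat) (F f : R -> R) (u : R) : R :=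
  Binomial.C (n - 1) (k - 1) * (1 - F u) ^ (k - 2) * (F u) ^ (n - k) * f u.

Definition Nfun (n k : nat) (F f : R -> R) (vbar v : R) : R :=
  RInt (fun u => (Derive (interim_pay n k F) u
                  - exp_revenue n k F f vbar * Gfun n k F f u) * (1 - F u)) 0 v.

Definition Dfun (n k : nat) (F : R -> R) (v : R) : R :=
  Binomial.C (n - 1) (k - 1) * (F v) ^ (n - k) * (1 - F v) ^ k.

Definition psi (n k : nat) (F f : R -> R) (vbar v : R) : R :=
  Nfun n k F f vbar v / Dfun n k F v.

(* Main.v *)
Require Import Defs.
From Stdlib Require Import Reals Binomial Lia Lra.
From Coquelicot Require Import Coquelicot.
Open Scope R_scope.

Lemma sum_is_derive (g dg : nat -> R -> R) m y :
  (forall j, is_derive (g j) y (dg j y)) ->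
  is_derive (fun y => sum_f_R0 (fun j => g j y) m) y (sum_f_R0 (fun j => dg j y) m).
Proof.
  intros H; induction m as [|m IH]; simpl.
  - apply H.
  - apply (is_derive_plus (fun y => sum_f_R0 (fun j => g j y) m) (g (S m))); auto.
Qed.

Lemma sum_ex_derive (g : nat -> R -> R) m y :
  (forall j, ex_derive (g j) y) ->
  ex_derive (fun y => sum_f_R0 (fun j => g j y) m) y.
Proof.
  intros H; induction m as [|m IH]; simpl.
  - apply H.
  - apply (ex_derive_plus (fun y => sum_f_R0 (fun j => g j y) m) (g (S m))); auto.
Qed.

Definition Pp (n k : nat) (y : R) : R :=
  sum_f_R0 (fun j => Binomial.C (n - 1) j * (1 - y) ^ j * y ^ (n - 1 - j)) (k - 1).
Definition dP (n k : nat) (y : R) : R :=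
  sum_f_R0 (fun j => Binomial.C (n - 1) j * (- (INR j * (1 - y) ^ pred j)) * y ^ (n - 1 - j)
     + Binomial.C (n - 1) j * (1 - y) ^ j * (INR (n - 1 - j) * y ^ pred (n - 1 - j))) (k - 1).

Lemma Pp_derive n k y : is_derive (Pp n k) y (dP n k y).
Proof.
  unfold Pp, dP.
  apply (sum_is_derive (fun j y => Binomial.C (n - 1) j * (1 - y) ^ j * y ^ (n - 1 - j))
    (fun j y => Binomial.C (n - 1) j * (- (INR j * (1 - y) ^ pred j)) * y ^ (n - 1 - j)
     + Binomial.C (n - 1) j * (1 - y) ^ j * (INR (n - 1 - j) * y ^ pred (n - 1 - j)))).
  intros j. auto_derive. auto. set (Y := (y:R)). clearbody Y. unfold Rminus. ring.
Qed.

Lemma dP_cont n k y : continuous (dP n k) y.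
Proof.
  apply (@ex_derive_continuous R_AbsRing R_NormedModule). unfold dP.
  apply (sum_ex_derive (fun j y => Binomial.C (n - 1) j * (- (INR j * (1 - y) ^ pred j)) * y ^ (n - 1 - j)
     + Binomial.C (n - 1) j * (1 - y) ^ j * (INR (n - 1 - j) * y ^ pred (n - 1 - j)))).
  intros j. auto_derive. auto.
Qed.

Lemma C_ge0 a b : 0 <= Binomial.C a b.
Proof.
  unfold Binomial.C. apply Rmult_le_pos. apply pos_INR.
  apply Rlt_le, Rinv_0_lt_compat, Rmult_lt_0_compat; apply lt_0_INR, Factorial.lt_O_fact.
Qed.
Lemma C_gt0 a b : 0 < Binomial.C a b.
Proof.
  unfold Binomial.C. apply Rmult_lt_0_compat. apply lt_0_INR, Factorial.lt_O_fact.
  apply Rinv_0_lt_compat, Rmult_lt_0_compat; apply lt_0_INR, Factorial.lt_O_fact.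
Qed.

Lemma pow_dec y m p : 0 <= y <= 1 -> (m <= p)%nat -> y ^ p <= y ^ m.
Proof.
  intros Hy Hmp. replace p with (m + (p - m))%nat by lia. rewrite pow_add.
  assert (0 <= y ^ m) by (apply pow_le; lra).
  assert (0 <= y ^ (p - m) <= 1).
  { split. apply pow_le; lra. rewrite <- (pow1 (p-m)). apply pow_incr; lra. }
  nra.
Qed.

Lemma pow_le1 y m : 0 <= y <= 1 -> 0 <= y ^ m <= 1.
Proof. intros; split. apply pow_le; lra. rewrite <- (pow1 m). apply pow_incr; lra. Qed.

Definition Mc (n k : nat) : R :=
  sum_f_R0 (fun j => Binomial.C (n - 1) j * (INR j + INR (n - 1 - j))) (k - 1).

Lemma dP_bound n k y : (1 <= k)%nat -> (k < n)%nat -> 0 <= y <= 1 ->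
  Rabs (dP n k y) <= Mc n k * y ^ (n - k - 1).
Proof.
  intros Hk Hkn Hy. unfold dP, Mc.
  eapply Rle_trans. apply sum_f_R0_triangle.
  rewrite Rmult_comm, scal_sum. apply sum_Rle. intros j Hj.
  pose proof (C_ge0 (n-1) j) as HC.
  pose proof (pow_le1 (1-y) (pred j) ltac:(lra)).
  pose proof (pow_le1 (1-y) j ltac:(lra)).
  pose proof (pow_dec y (n-k-1) (n-1-j) Hy ltac:(lia)).
  pose proof (pow_dec y (n-k-1) (pred (n-1-j)) Hy ltac:(lia)).
  pose proof (pow_le y (n-1-j) ltac:(lra)).
  pose proof (pow_le y (pred (n-1-j)) ltac:(lra)).
  pose proof (pos_INR j). pose proof (pos_INR (n-1-j)).
  eapply Rle_trans. apply Rabs_triang.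
  rewrite !Rabs_mult, Rabs_Ropp, !Rabs_mult.
  rewrite !(Rabs_pos_eq (Binomial.C _ _)), !(Rabs_pos_eq (INR _)), !(Rabs_pos_eq ((1-y)^_)),
    !(Rabs_pos_eq (y^_)); try lra.
  set (A := (1-y)^pred j) in *. set (B := (1-y)^j) in *.
  set (u := y ^ (n-1-j)) in *. set (w := y ^ pred (n-1-j)) in *.
  set (z := y ^ (n-k-1)) in *. set (c := Binomial.C (n-1) j) in *.
  set (p := INR j) in *. set (q := INR (n-1-j)) in *.
  assert (p * A * u <= p * z) by (apply Rle_trans with (p * 1 * z); [apply Rmult_le_compat; nra|lra]).
  assert (B * (q * w) <= q * z) by (apply Rle_trans with (1 * (q * z)); [apply Rmult_le_compat; nra|lra]).
  nra.
Qed.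

Lemma cm (f g : R -> R) x : continuous f x -> continuous g x -> continuous (fun y => f y * g y) x.
Proof. apply (continuous_mult f g x). Qed.
Lemma cmi (f g : R -> R) x : continuous f x -> continuous g x -> continuous (fun y => f y - g y) x.
Proof. apply (continuous_minus f g x). Qed.
Lemma cc (c : R) x : continuous (fun _ : R => c) x.
Proof. apply continuous_const. Qed.
Lemma cid x : continuous (fun y : R => y) x.
Proof. apply continuous_id. Qed.
Lemma cpow (f : R -> R) p x : continuous f x -> continuous (fun y => f y ^ p) x.
Proof. intros H; induction p; simpl. apply cc. apply cm; auto. Qed.

Lemma clamp_lip vbar x y : 0 < vbar ->
  Rabs (Rmax 0 (Rmin x vbar) - Rmax 0 (Rmin y vbar)) <= Rabs (x - y).
Proof.
  intros H. unfold Rmax, Rmin.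
  repeat (destruct Rle_dec); unfold Rabs; repeat (destruct Rcase_abs); lra.
Qed.

Theorem mainTheorem14 (n k : nat) (vbar : R) (F f : R -> R) :
  (2 <= k)%nat -> (k < n)%nat -> 0 < vbar ->
  (forall u, 0 <= u <= vbar -> 0 < f u) ->
  (forall u, 0 <= u <= vbar ->
     filterlim f (within (fun t => 0 <= t <= vbar) (locally u)) (locally (f u))) ->
  (forall u, 0 <= u <= vbar -> F u = RInt f 0 u) ->
  F vbar = 1 ->
  (forall u, u < 0 -> F u = 0) ->
  (forall u, vbar < u -> F u = 1) ->
  filterlim (psi n k F f vbar) (at_right 0) (locally 0).
Proof.
  intros Hk Hkn Hvb Hfpos Hfc HF HF1 HF0 HF1'.
  set (cl := fun t => Rmax 0 (Rmin t vbar)).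
  assert (Hcl : forall t, 0 <= cl t <= vbar).
  { intros t; unfold cl, Rmax, Rmin; repeat destruct Rle_dec; lra. }
  assert (Hclid : forall t, 0 <= t <= vbar -> cl t = t).
  { intros t Ht; unfold cl, Rmax, Rmin; repeat destruct Rle_dec; lra. }
  set (ft := fun t => f (cl t)).
  assert (Hfteq : forall t, 0 <= t <= vbar -> ft t = f t).
  { intros t Ht; unfold ft; rewrite Hclid; auto. }
  assert (Hftc : forall t, continuous ft t).
  { intros t. unfold continuous, ft.
    apply filterlim_comp with (G := within (fun t => 0 <= t <= vbar) (locally (cl t))).
    - intros P HP. unfold within in HP. destruct HP as [eps HP].
      unfold filtermap. exists eps. intros y Hy. apply HP.
      + change (Rabs (cl y - cl t) < eps). change (Rabs (y - t) < eps) in Hy.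
        unfold cl. eapply Rle_lt_trans. apply clamp_lip; auto. auto.
      + apply Hcl.
    - apply Hfc, Hcl. }
  set (Ft := fun t => RInt ft 0 t).
  assert (HFtd : forall t, is_derive Ft t (ft t)).
  { intros t. apply (is_derive_RInt ft Ft 0 t).
    apply filter_forall. intros b. apply (RInt_correct ft 0 b).
    apply ex_RInt_continuous. intros; apply Hftc. apply Hftc. }
  assert (HFtc : forall t, continuous Ft t).
  { intros t. apply (@ex_derive_continuous R_AbsRing R_NormedModule). eexists; apply HFtd. }
  assert (HFeq : forall t, 0 <= t <= vbar -> F t = Ft t).
  { intros t Ht. rewrite HF; auto. unfold Ft. apply RInt_ext.
    intros x Hx. rewrite Rmin_left in Hx by lra. rewrite Rmax_right in Hx by lra.
    rewrite Hfteq; auto; lra. }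
  set (Xt := fun t => Pp n k (Ft t)).
  assert (HXd : forall t, is_derive Xt t (ft t * dP n k (Ft t))).
  { intros t. apply (is_derive_comp (Pp n k) Ft t). apply Pp_derive. apply HFtd. }
  assert (HXc : forall t, continuous Xt t).
  { intros t. apply (@ex_derive_continuous R_AbsRing R_NormedModule). eexists; apply HXd. }
  set (zt := fun t => t * Xt t - RInt Xt 0 t).
  assert (Hzd : forall t, is_derive zt t (t * (ft t * dP n k (Ft t)))).
  { intros t.
    assert (H1 := is_derive_mult (fun t => t) Xt t one _ (is_derive_id t) (HXd t) Rmult_comm).
    assert (H2 : is_derive (RInt Xt 0) t (Xt t)).
    { apply (is_derive_RInt Xt (RInt Xt 0) 0 t).
      apply filter_forall. intros b. apply (RInt_correct Xt 0 b).
      apply ex_RInt_continuous. intros; apply HXc. apply HXc. }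
    assert (H3 := is_derive_minus _ _ t _ _ H1 H2).
    replace (t * (ft t * dP n k (Ft t))) with
      (minus (plus (mult one (Xt t)) (mult t (ft t * dP n k (Ft t)))) (Xt t)).
    exact H3.
    unfold minus, plus, mult, opp, one; simpl. ring. }
  assert (HDz : forall u, 0 < u < vbar -> Derive (interim_pay n k F) u = u * (ft u * dP n k (Ft u))).
  { intros u Hu. rewrite (Derive_ext_loc _ zt). apply is_derive_unique, Hzd.
    assert (He : 0 < Rmin u (vbar - u)) by (apply Rmin_glb_lt; lra).
    exists (mkposreal _ He). intros w Hw. change (Rabs (w - u) < Rmin u (vbar - u)) in Hw.
    assert (Hw1 := Rmin_l u (vbar - u)). assert (Hw2 := Rmin_r u (vbar - u)).
    assert (Hw' : 0 < w < vbar) by (unfold Rabs in Hw; destruct Rcase_abs in Hw; lra).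
    unfold interim_pay, interim_alloc, zt, Xt, Pp. rewrite HFeq by lra. f_equal.
    apply RInt_ext. intros x Hx. rewrite Rmin_left in Hx by lra. rewrite Rmax_right in Hx by lra.
    rewrite HFeq by lra. reflexivity. }
  set (Rb := exp_revenue n k F f vbar).
  set (Cb := Binomial.C (n - 1) (k - 1)).
  set (h := fun u => (u * (ft u * dP n k (Ft u)) - Rb * (Cb * (1 - Ft u) ^ (k - 2) * Ft u ^ (n - k) * ft u)) * (1 - Ft u)).
  assert (Hhc : forall u, continuous h u).
  { intros u. unfold h.
    assert (HP' : continuous (fun u => dP n k (Ft u)) u).
    { apply (continuous_comp Ft (dP n k)). apply HFtc. apply dP_cont. }
    apply cm; [apply cmi; [apply cm; [apply cid | apply cm; [apply Hftc | apply HP']] | apply cm; [apply cc | apply cm; [apply cm; [apply cm; [apply cc | apply cpow; apply cmi; [apply cc | apply HFtc]] | apply cpow; apply HFtc] | apply Hftc]]] | apply cmi; [apply cc | apply HFtc]]. }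
  assert (HN : forall v, 0 < v < vbar -> Nfun n k F f vbar v = RInt h 0 v).
  { intros v Hv. unfold Nfun. apply RInt_ext. intros x Hx.
    rewrite Rmin_left in Hx by lra. rewrite Rmax_right in Hx by lra.
    rewrite HDz by lra. unfold h, Gfun. fold Rb. fold Cb.
    rewrite HFeq by lra. rewrite (Hfteq x) by lra. reflexivity. }
  set (a := f 0).
  assert (Ha : 0 < a) by (apply Hfpos; lra).
  assert (Ha2 : 0 < a / 2) by lra.
  destruct (Hfc 0 ltac:(lra) (ball a (mkposreal _ Ha2)) (locally_ball _ _)) as [e0 He0].
  assert (Hfb : forall t, 0 <= t < e0 -> t <= vbar -> a / 2 < f t < 2 * a).
  { intros t Ht1 Ht2. assert (Hb : ball 0 e0 t).
    { change (Rabs (t - 0) < e0). rewrite Rminus_0_r, Rabs_pos_eq; lra. }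
    specialize (He0 t Hb ltac:(lra)). change (Rabs (f t - a) < a / 2) in He0.
    unfold Rabs in He0; destruct Rcase_abs in He0; lra. }
  set (del := Rmin (Rmin e0 vbar) (/ (4 * a))).
  assert (Hdel : 0 < del).
  { apply Rmin_glb_lt. apply Rmin_glb_lt. apply cond_pos. lra. apply Rinv_0_lt_compat; lra. }
  assert (Hdel1 : del <= e0) by (eapply Rle_trans; [apply Rmin_l|apply Rmin_l]).
  assert (Hdel2 : del <= vbar) by (eapply Rle_trans; [apply Rmin_l|apply Rmin_r]).
  assert (Hdel3 : del <= / (4 * a)) by apply Rmin_r.
  assert (Hdel4 : 2 * a * del <= 1 / 2).
  { apply Rle_trans with (2 * a * / (4 * a)). apply Rmult_le_compat_l; lra.
    right. field. lra. }
  assert (HFb : forall u, 0 <= u < del -> a / 2 * u <= Ft u <= 2 * a * u).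
  { intros u Hu. unfold Ft.
    assert (Hex : ex_RInt ft 0 u) by (apply (@ex_RInt_continuous R_CompleteNormedModule); intros; apply Hftc).
    split.
    - replace (a / 2 * u) with (RInt (fun _ => a / 2) 0 u).
      apply RInt_le; auto. lra. apply ex_RInt_const.
      intros x Hx. rewrite Hfteq by lra. apply Rlt_le, Hfb; lra.
      rewrite RInt_const. unfold scal; simpl; unfold mult; simpl. ring.
    - replace (2 * a * u) with (RInt (fun _ => 2 * a) 0 u).
      apply RInt_le; auto. lra. apply ex_RInt_const.
      intros x Hx. rewrite Hfteq by lra. apply Rlt_le, Hfb; lra.
      rewrite RInt_const. unfold scal; simpl; unfold mult; simpl. ring. }
  set (K := Rabs (Mc n k) + Rabs Rb * Cb * (2 * a)).
  assert (HCb : 0 < Cb) by apply C_gt0.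
  assert (Hhb : forall v, 0 < v < del -> forall u, 0 <= u <= v ->
             Rabs (h u) <= K * (2 * a * v) ^ (n - k)).
  { intros v Hv u Hu. unfold h.
    assert (HFu := HFb u ltac:(lra)).
    set (y := Ft u) in *. set (W := 2 * a * v).
    assert (HW0 : 0 <= W) by (unfold W; nra).
    assert (HyW : 0 <= y <= W) by (split; unfold W; nra).
    assert (HW1 : W <= 1 / 2) by (unfold W; nra).
    assert (Hfu : a / 2 < ft u < 2 * a) by (rewrite Hfteq by lra; apply Hfb; lra).
    set (fu := ft u) in *.
    assert (HdP := dP_bound n k y ltac:(lia) Hkn ltac:(lra)).
    assert (HWp : W ^ (n - k) = W * W ^ (n - k - 1)).
    { replace (n - k)%nat with (S (n - k - 1)) at 1 by lia. reflexivity. }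
    assert (Hp1 : 0 <= y ^ (n - k - 1) <= W ^ (n - k - 1)) by (split; [apply pow_le; lra | apply pow_incr; lra]).
    assert (Hp2 : 0 <= y ^ (n - k) <= W ^ (n - k)) by (split; [apply pow_le; lra | apply pow_incr; lra]).
    assert (Hp3 := pow_le1 (1 - y) (k - 2) ltac:(lra)).
    set (P1 := y ^ (n - k - 1)) in *. set (P2 := y ^ (n - k)) in *. set (P3 := (1 - y) ^ (k - 2)) in *.
    set (Q1 := W ^ (n - k - 1)) in *. set (Q2 := W ^ (n - k)) in *.
    set (d := dP n k y) in *.
    assert (HA : Rabs (u * (fu * d)) <= Rabs (Mc n k) * Q2).
    { rewrite !Rabs_mult, (Rabs_pos_eq u), (Rabs_pos_eq fu) by lra.
      assert (Rabs d <= Rabs (Mc n k) * Q1).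
      { eapply Rle_trans. apply HdP. apply Rle_trans with (Rabs (Mc n k) * P1).
        apply Rmult_le_compat_r; [lra | apply Rle_abs].
        apply Rmult_le_compat_l; [apply Rabs_pos | lra]. }
      rewrite HWp. unfold W.
      apply Rle_trans with (v * (2 * a * (Rabs (Mc n k) * Q1))).
      apply Rmult_le_compat; try lra. apply Rmult_le_pos; [lra|apply Rabs_pos].
      apply Rmult_le_compat; try lra. apply Rabs_pos.
      right. ring. }
    assert (HB : Rabs (Rb * (Cb * P3 * P2 * fu)) <= Rabs Rb * Cb * (2 * a) * Q2).
    { rewrite Rabs_mult. rewrite (Rabs_pos_eq (Cb * P3 * P2 * fu)).
      replace (Rabs Rb * Cb * (2 * a) * Q2) with (Rabs Rb * (Cb * 1 * Q2 * (2 * a))) by ring.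
      apply Rmult_le_compat_l. apply Rabs_pos.
      apply Rmult_le_compat; try lra.
      apply Rmult_le_pos; [apply Rmult_le_pos|]; lra.
      apply Rmult_le_compat; try lra.
      apply Rmult_le_pos; lra.
      apply Rmult_le_compat; lra.
      apply Rmult_le_pos; [apply Rmult_le_pos; [apply Rmult_le_pos|]|]; lra. }
    rewrite Rabs_mult.
    assert (H1y : Rabs (1 - y) <= 1) by (rewrite Rabs_pos_eq; lra).
    assert (Hsub : Rabs (u * (fu * d) - Rb * (Cb * P3 * P2 * fu)) <=
                   Rabs (u * (fu * d)) + Rabs (Rb * (Cb * P3 * P2 * fu))).
    { unfold Rminus. eapply Rle_trans. apply Rabs_triang. rewrite Rabs_Ropp. lra. }
    apply Rle_trans with ((Rabs (u * (fu * d)) + Rabs (Rb * (Cb * P3 * P2 * fu))) * 1).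
    apply Rmult_le_compat; try lra. apply Rabs_pos. apply Rabs_pos.
    unfold K. lra. }
  assert (HK : 0 <= K).
  { unfold K. assert (0 <= Rabs Rb * Cb * (2 * a)).
    { apply Rmult_le_pos; [apply Rmult_le_pos; [apply Rabs_pos|lra]|lra]. }
    pose proof (Rabs_pos (Mc n k)). lra. }
  set (H2 := (/ 2) ^ k).
  assert (HH2 : 0 < H2) by (apply pow_lt; lra).
  set (L := K * 4 ^ (n - k) / (Cb * H2)).
  assert (HL : 0 <= L).
  { unfold L. apply Rmult_le_pos. apply Rmult_le_pos; auto. apply pow_le; lra.
    apply Rlt_le, Rinv_0_lt_compat, Rmult_lt_0_compat; auto. }
  assert (Hpsi : forall v, 0 < v < del -> Rabs (psi n k F f vbar v) <= v * L).
  { intros v Hv. unfold psi. rewrite HN by lra. unfold Dfun. rewrite HFeq by lra. fold Cb.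
    assert (HFv := HFb v ltac:(lra)).
    set (Fv := Ft v) in *.
    set (Q := (a / 2 * v) ^ (n - k)).
    assert (HQ : 0 < Q) by (apply pow_lt; nra).
    assert (HQ1 : Q <= Fv ^ (n - k)) by (apply pow_incr; nra).
    assert (HQ2 : H2 <= (1 - Fv) ^ k) by (apply pow_incr; nra).
    assert (HD : Cb * Q * H2 <= Cb * Fv ^ (n - k) * (1 - Fv) ^ k).
    { apply Rmult_le_compat; try lra. apply Rmult_le_pos; lra.
      apply Rmult_le_compat_l; lra. }
    set (Dv := Cb * Fv ^ (n - k) * (1 - Fv) ^ k) in *.
    assert (HDv : 0 < Dv).
    { apply Rlt_le_trans with (Cb * Q * H2); auto. apply Rmult_lt_0_compat; auto.
      apply Rmult_lt_0_compat; auto. }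
    assert (HNb : Rabs (RInt h 0 v) <= (v - 0) * (K * (2 * a * v) ^ (n - k))).
    { apply abs_RInt_le_const. lra.
      apply (@ex_RInt_continuous R_CompleteNormedModule). intros; apply Hhc.
      intros t Ht. apply Hhb; lra. }
    assert (HWQ : (2 * a * v) ^ (n - k) = 4 ^ (n - k) * Q).
    { unfold Q. rewrite <- Rpow_mult_distr. f_equal. field. }
    rewrite HWQ in HNb.
    rewrite Rabs_div by lra. rewrite (Rabs_pos_eq Dv) by lra.
    apply Rle_div_l. lra.
    apply Rle_trans with (v * K * 4 ^ (n - k) * Q). lra.
    replace (v * K * 4 ^ (n - k) * Q) with (v * L * (Cb * Q * H2)).
    apply Rmult_le_compat_l. apply Rmult_le_pos; lra. lra.
    unfold L. field. split; lra. }
  intros P [eps HP]. unfold filtermap, at_right, within.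
  assert (He : 0 < Rmin del (eps / (L + 1))).
  { apply Rmin_glb_lt; auto. apply Rdiv_lt_0_compat; [apply cond_pos|lra]. }
  exists (mkposreal _ He). intros v Hv Hv0. apply HP.
  change (Rabs (psi n k F f vbar v - 0) < eps). rewrite Rminus_0_r.
  change (Rabs (v - 0) < Rmin del (eps / (L + 1))) in Hv. rewrite Rminus_0_r, Rabs_pos_eq in Hv by lra.
  assert (Hv1 := Rmin_l del (eps / (L + 1))). assert (Hv2 := Rmin_r del (eps / (L + 1))).
  assert (Hvl : v * (L + 1) < eps).
  { replace (pos eps) with (eps / (L + 1) * (L + 1)) by (field; lra).
    apply Rmult_lt_compat_r; lra. }
  eapply Rle_lt_trans. apply Hpsi. lra. nra.
Qed.
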